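(* Any algorithm that estimates the maximum path cover size of an $n$-vertex graph within a constant multiplicative factor requires $\Omega(n)$ queries in the adjacency list model.
   Context: A path cover is a collection of vertex-disjoint simple paths; its size is the total number of edges, and the maximum path cover size is the maximum over all path covers. Estimating within a constant multiplicative factor $\gamma\in(0,1]$ means outputting $\tilde{\rho}$ with $\gamma\rho\le\tilde{\rho}\le\rho$. In the adjacency list model the algorithm may query the degree of a vertex and the $i$-th neighbor of a vertex in its adjacency list. *)

(* Defs.v *)
From Stdlib Require List.
From mathcomp Require Import all_boot all_order all_algebra.
From mathcomp Require Import boolp.
Set Implicit Arguments. Unset Strict Implicit. Unset Printing Implicit Defensive.
Import Order.TTheory GRing.Theory Num.Theory.
Local Open Scope ring_scope.

(* A graph on the vertex set 'I_n given in the adjacency list model: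
   each vertex v has an ordered adjacency list [adj v]. *)
Definition adjlist (n : nat) := 'I_n -> seq 'I_n.

Definition simple_adjlist (n : nat) (adj : adjlist n) : Prop :=
  forall v : 'I_n,
    [/\ uniq (adj v), v \notin adj v &
        forall u : 'I_n, (u \in adj v) = (v \in adj u)].

(* A simple path: a sequence of distinct vertices, consecutive ones adjacent.
   Its number of edges is (size p).-1. *)
Definition is_simple_path (n : nat) (adj : adjlist n) (p : seq 'I_n) : bool :=
  uniq p && sorted (fun u v => v \in adj u) p.

Definition is_path_cover (n : nat) (adj : adjlist n) (P : seq (seq 'I_n)) : bool :=
  all (is_simple_path adj) P && uniq (flatten P).

Definition path_cover_size (n : nat) (P : seq (seq 'I_n)) : nat :=
  sumn [seq (size p).-1 | p <- P].

Definition is_max_path_cover_size (n : nat) (adj : adjlist n) (r : nat) : Prop :=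
  (exists2 P, is_path_cover adj P & path_cover_size P = r) /\
  (forall P, is_path_cover adj P -> (path_cover_size P <= r)%N).

(* Deterministic adaptive query algorithms (decision trees) in the adjacency
   list model, outputting an estimate in R.
   - QDeg v k : query the degree of v, continue with k (degree)
   - QNbr v i k : query the i-th (0-based) neighbour of v; answer is
                  Some u, or None if i >= deg v. *)
Inductive qtree (R : Type) (n : nat) : Type :=
| Leaf of R
| QDeg of 'I_n & (nat -> qtree R n)
| QNbr of 'I_n & nat & (option 'I_n -> qtree R n).

(* Run a decision tree on a graph: (output, number of queries made). *)
Fixpoint run (R : Type) (n : nat) (adj : adjlist n) (t : qtree R n) : R * nat :=
  match t with
  | Leaf r => (r, 0%N)
  | QDeg v k => let: (o, q) := run adj (k (size (adj v))) in (o, q.+1)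
  | QNbr v i k => let: (o, q) := run adj (k (onth (adj v) i)) in (o, q.+1)
  end.

(* A randomized algorithm: a finitely supported probability distribution
   over deterministic decision trees (weight, tree). *)
Notation rand_alg R n := (seq (prod R (qtree R n))) (only parsing).

Definition is_distribution (R : numDomainType) (n : nat) (A : rand_alg R n) : Prop :=
  (forall wt : R * qtree R n, List.In wt A -> 0 <= wt.1) /\ \sum_(wt <- A) wt.1 = 1.

Definition good_estimate (R : numDomainType) (n : nat) (adj : adjlist n)
    (gamma x : R) : bool :=
  `[< forall r : nat, is_max_path_cover_size adj r ->
        gamma * r%:R <= x /\ x <= r%:R >].

Definition success_prob (R : numDomainType) (n : nat) (gamma : R)
    (A : rand_alg R n) (adj : adjlist n) : R :=
  \sum_(wt <- A) wt.1 * (good_estimate adj gamma (run adj wt.2).1)%:R.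

(* Main.v *)
Require Import Defs.
From Stdlib Require List.
From mathcomp Require Import all_boot all_order all_algebra.
From mathcomp Require Import boolp zify ring lra.
Set Implicit Arguments. Unset Strict Implicit. Unset Printing Implicit Defensive.
Import Order.TTheory GRing.Theory Num.Theory.
Local Open Scope ring_scope.

Definition Eadj (n : nat) : adjlist n := fun _ => [::].
Arguments Eadj {n}.
Definition Gadj (n : nat) (u v : 'I_n) : adjlist n :=
  fun w => if w == u then [:: v] else if w == v then [:: u] else [::].

Lemma Eadj_simple n : simple_adjlist (@Eadj n).
Proof. by move=> v; split. Qed.

Lemma Gadj_simple n (u v : 'I_n) : u != v -> simple_adjlist (Gadj u v).
Proof.
move=> uv w; rewrite /Gadj; split.
- by do ! case: eqP.
- case: eqP => [->|_]; first by rewrite inE.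
  by case: eqP => [->|_] //; rewrite inE eq_sym.
- move=> x; have vu : v != u by rewrite eq_sym.
case: (eqVneq w u) => [->|wu]; case: (eqVneq x u) => [->|xu]; rewrite ?eqxx ?(negbTE uv) ?(negbTE vu) ?inE ?(negbTE wu) ?(negbTE xu) //=.
all: try (case: (eqVneq x v) => [->|xv]; rewrite ?eqxx ?(negbTE uv) ?(negbTE vu) ?inE ?(negbTE xv) ?(negbTE xu) //=).
all: try (case: (eqVneq w v) => [->|wv]; rewrite ?eqxx ?(negbTE uv) ?(negbTE vu) ?inE ?(negbTE wv) ?(negbTE wu) ?(negbTE xu) //=).
all: rewrite ?(eq_sym x) ?(eq_sym v) ?(negbTE uv) //.
all: by case: (_ == v); rewrite ?inE ?eqxx.
Qed.

Lemma pcs_le_flatten n (P : seq (seq 'I_n)) : (path_cover_size P <= size (flatten P))%N.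
Proof.
elim: P => [|p P IH] //=; rewrite /path_cover_size /= size_cat.
apply: leq_add => //; exact: leq_pred.
Qed.

Lemma pcs_le_n n (adj : adjlist n) P : is_path_cover adj P -> (path_cover_size P <= n)%N.
Proof.
case/andP=> _ U; apply: leq_trans (pcs_le_flatten P) _.
by rewrite -(card_uniqP U) -[X in (_ <= X)%N](card_ord n) max_card.
Qed.

Lemma max_exists n (adj : adjlist n) : exists r, is_max_path_cover_size adj r.
Proof.
pose Pr := fun k : nat => `[< exists2 P, is_path_cover adj P & path_cover_size P = k >].
have ex : exists i, Pr i.
  by exists 0%N; apply/asboolP; exists [::].
have ub : forall i, Pr i -> (i <= n)%N.
  by move=> i /asboolP [P HP <-]; exact: pcs_le_n HP.
case: (ex_maxnP ex ub) => r /asboolP Hr Hmax.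
exists r; split => // P HP; apply: Hmax; apply/asboolP; by exists P.
Qed.

Lemma E_cover_size n P : is_path_cover (@Eadj n) P -> path_cover_size P = 0%N.
Proof.
elim: P => [|p P IH] //= /andP [/= /andP [/andP [_ Hp] HP] U].
rewrite /path_cover_size /=.
have -> : (size p).-1 = 0%N by case: (p) Hp => [|x [|y q]].
rewrite add0n; apply: IH; rewrite /is_path_cover HP /=.
by rewrite cat_uniq in U; case/and3P: U.
Qed.

Lemma goodE_le0 (R : numDomainType) n (gamma x : R) :
  good_estimate (@Eadj n) gamma x -> x <= 0.
Proof.
move/asboolP => H.
have : is_max_path_cover_size (@Eadj n) 0.
  split; first by exists [::].
  by move=> P /E_cover_size ->.
by case/H.
Qed.

Lemma goodG_gt0 (R : numDomainType) n (u v : 'I_n) (gamma x : R) :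
  u != v -> 0 < gamma -> good_estimate (Gadj u v) gamma x -> 0 < x.
Proof.
move=> uv g0 /asboolP H.
case: (max_exists (Gadj u v)) => r Hr.
have r1 : (1 <= r)%N.
  case: Hr => _ Hr; apply: (Hr [:: [:: u; v]]).
  by rewrite /is_path_cover /= /is_simple_path /= !inE uv /Gadj eqxx !inE eqxx.
case: (H r Hr) => Hl _; apply: lt_le_trans Hl.
by rewrite mulr_gt0 // ltr0n.
Qed.


Fixpoint touch (R : Type) n (t : qtree R n) : seq 'I_n :=
  match t with
  | Leaf _ => [::]
  | QDeg v k => v :: touch (k 0%N)
  | QNbr v _ k => v :: touch (k None)
  end.

Lemma run_E (R : Type) n (t : qtree R n) : (run (@Eadj n) t).2 = size (touch t).
Proof.
elim: t => [r|v k IH|v i k IH] //=.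
- rewrite /Eadj /=; move: (IH 0%N); case: (run _ _) => o q /= ->. done.
- rewrite /Eadj /= onth0n; move: (IH None); case: (run _ _) => o q /= ->. done.
Qed.

Lemma run_G (R : Type) n (u v : 'I_n) (t : qtree R n) :
  u \notin touch t -> v \notin touch t -> run (Gadj u v) t = run (@Eadj n) t.
Proof.
elim: t => [r|w k IH|w i k IH] //=; rewrite !inE !negb_or => /andP [wu Hu] /andP [wv Hv].
- have -> : Gadj u v w = [::] by rewrite /Gadj eq_sym (negbTE wu) eq_sym (negbTE wv).
  by rewrite /Eadj /= (IH 0%N Hu Hv).
- have -> : Gadj u v w = [::] by rewrite /Gadj eq_sym (negbTE wu) eq_sym (negbTE wv).
  by rewrite /Eadj /= onth0n (IH None Hu Hv).
Qed.

Lemma sum_le_In (R : numDomainType) (T : Type) (A : seq T) (F G : T -> R) :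
  (forall x, List.In x A -> F x <= G x) -> \sum_(x <- A) F x <= \sum_(x <- A) G x.
Proof.
elim: A => [|a A IH] H; first by rewrite !big_nil.
rewrite !big_cons; apply: lerD; first by apply: H; left.
by apply: IH => x Hx; apply: H; right.
Qed.

Lemma pair_ineq (R : realFieldType) n (gamma : R) (A : seq (R * qtree R n))
  (hg : 0 < gamma) (hA : forall wt, List.In wt A -> 0 <= wt.1)
  (u v : 'I_n) (uv : u != v) (P : pred 'I_n) (Pu : P u) (Pv : P v) :
  success_prob gamma A (@Eadj n) + success_prob gamma A (Gadj u v) <=
  \sum_(wt <- A) wt.1 + \sum_(wt <- A) wt.1 * (has P (touch wt.2))%:R.
Proof.
rewrite /success_prob -!big_split /=; apply: sum_le_In => wt Hin.
rewrite -mulrDr -[X in _ <= X + _]mulr1 -mulrDr; apply: ler_wpM2l; first exact: hA.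
case Hh: (has P (touch wt.2)).
  by case: (good_estimate _ _ _); case: (good_estimate _ _ _); rewrite /= ?addr0 ?add0r ?lerr ?ler1n //; lra.
move/hasPn: Hh => Hh.
have Hu : u \notin touch wt.2 by apply/negP => /Hh; rewrite Pu.
have Hv : v \notin touch wt.2 by apply/negP => /Hh; rewrite Pv.
rewrite run_G // addr0.
case E1: (good_estimate _ _ _); case E2: (good_estimate _ _ _) => //=; rewrite ?addr0 ?add0r //=; try lra.
move: (goodE_le0 E1) (goodG_gt0 uv hg E2) => a b.
by move: (le_lt_trans a b); rewrite ltxx.
all: lra.
Qed.


Lemma sum_ind_le1 (m k : nat) : (\sum_(i < m) (k == i :> nat) <= 1)%N.
Proof.
suff -> : (\sum_(i < m) (k == i :> nat))%N = (k < m)%N by case: (k < m)%N.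
elim: m => [|m IH]; first by rewrite big_ord0.
rewrite big_ord_recr /= IH [(k < m.+1)%N]ltnS [(k <= m)%N]leq_eqVlt.
case h: (k < m)%N; last by rewrite orbF; case: (k == m)%N.
have -> : (k == m) = false by apply/eqP => e; rewrite e ltnn in h.
by rewrite orbT.
Qed.

Lemma count_pairs k (m : nat) (s : seq 'I_k) :
  (\sum_(i < m) has (fun x : 'I_k => x./2 == i) s <= size s)%N.
Proof.
elim: s => [|x s IH] /=; first by rewrite big1.
apply: leq_trans (_ : \sum_(i < m) ((x./2 == i :> nat) + has (fun x : 'I_k => x./2 == i) s) <= _)%N.
  by apply: leq_sum => i _; case: (_ == _); case: has.
rewrite big_split /= -add1n; apply: leq_add => //; exact: sum_ind_le1.
Qed.

Unset Implicit Arguments.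
Set Strict Implicit.

Theorem lemma11p6 (R : realFieldType) (gamma : R) :
  0 < gamma -> gamma <= 1 ->
  exists2 c : R, 0 < c &
  exists n0 : nat, forall n : nat, (n0 <= n)%N ->
  forall A : rand_alg R n, is_distribution A ->
  (forall adj : adjlist n, simple_adjlist adj -> 2 / 3 <= success_prob gamma A adj) ->
  exists adj : adjlist n, simple_adjlist adj /\
    exists wt : R * qtree R n, List.In wt A /\ 0 < wt.1 /\ c * n%:R <= ((run adj wt.2).2)%:R.
Proof.
move=> g0 g1; exists (1/12); first by rewrite divr_gt0 ?ltr0n.
exists 3%N => n Hn A [hA hsum] Hsucc.
apply: contrapT => Hno.
have Hq : forall wt : R * qtree R n, List.In wt A -> 0 < wt.1 ->
    (size (touch wt.2))%:R < 1/12 * n%:R :> R.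
  move=> wt Hin Hw; rewrite -run_E ltNge; apply/negP => Hle; apply: Hno.
  by exists Eadj; split; [exact: Eadj_simple | exists wt].
case: n Hn A hA hsum Hsucc Hq {Hno} => [//|n'] Hn A hA hsum Hsucc Hq.
set m := (n'.+1)./2.
have Hi : forall i : 'I_m,
    1/3 <= \sum_(wt <- A) wt.1 * (has (fun x : 'I_n'.+1 => x./2 == i) (touch wt.2))%:R.
  move=> i.
  have im : (2 * i + 1 < n'.+1)%N by have := ltn_ord i; rewrite /m; lia.
  pose u : 'I_n'.+1 := inord (2 * i); pose v : 'I_n'.+1 := inord (2 * i + 1).
  have uE : (u : nat) = (2 * i)%N by rewrite inordK //; lia.
  have vE : (v : nat) = (2 * i + 1)%N by rewrite inordK.
  have uv : u != v by apply/eqP => e; move: uE vE; rewrite e => ->; lia.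
  have := pair_ineq g0 hA uv (P := fun x : 'I_n'.+1 => x./2 == i).
  rewrite /= uE vE.
  have -> : ((2 * i)./2 == i) = true by apply/eqP; lia.
  have -> : ((2 * i + 1)./2 == i) = true by apply/eqP; lia.
  move=> /(_ isT isT); rewrite hsum => H.
  have h1 := Hsucc _ (@Eadj_simple _).
  have h2 := Hsucc _ (Gadj_simple uv).
  lra.
have Hsum : (m%:R / 3 : R) <= 1/12 * n'.+1%:R.
  apply: le_trans (_ : \sum_(i < m) \sum_(wt <- A) wt.1 * (has (fun x : 'I_n'.+1 => x./2 == i) (touch wt.2))%:R <= _).
    apply: le_trans (ler_sum _ (fun i _ => Hi i)).
    rewrite sumr_const card_ord -(mulr_natr (1/3 : R) m); lra.
  rewrite exchange_big /=.
  apply: le_trans (_ : \sum_(wt <- A) wt.1 * (1/12 * n'.+1%:R) <= _); last first.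
    rewrite -mulr_suml hsum; lra.
  apply: sum_le_In => wt Hin; rewrite -mulr_sumr -natr_sum.
  have := hA _ Hin; rewrite le0r => /orP [/eqP -> | Hw]; first by rewrite !mul0r.
  apply: ler_wpM2l; first exact: ltW.
  apply: le_trans (ltW (Hq _ Hin Hw)); rewrite ler_nat; exact: count_pairs.
have : ((4 * m)%:R : R) <= (n'.+1)%:R by rewrite natrM; lra.
rewrite ler_nat /m; lia.
Qed.
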